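(* Suppose $S\subseteq\{0,1\}^n$ and $f_t(\boldsymbol{x},\boldsymbol{\xi})=(\boldsymbol{A}^t\boldsymbol{x}+\boldsymbol{a}^t)^{\top}\boldsymbol{\xi}+(\boldsymbol{b}^t)^{\top}\boldsymbol{x}+h^t$ for all $t\in[T]$ (with $\boldsymbol{A}^t\in\mathbb{R}^{m\times n}$, $\boldsymbol{a}^t\in\mathbb{R}^m$, $\boldsymbol{b}^t\in\mathbb{R}^n$, $h^t\in\mathbb{R}$). Let $Z_{C_2}$ be the set of $\boldsymbol{x}\in\mathbb{R}^n$ for which there exist $\lambda\ge0$, $\alpha_t\ge0$, $s_i\ge0$, $\boldsymbol{z}_{it}\in\mathbb{R}^m$ satisfying the system ( * ): $\lambda\delta+\frac1N\sum_{i=1}^Ns_i\le\epsilon$; $G_{f_t}(\boldsymbol{z}_{it},\alpha_t,\boldsymbol{x})+1-\boldsymbol{z}_{it}^{\top}\boldsymbol{\zeta}^i-s_i\le0$ and $\|\boldsymbol{z}_{it}\|_*\le\lambda$ for all $i\in[N],t\in[T]$, where $G_{f_t}(\boldsymbol{z},\alpha,\boldsymbol{x})=\sup_{\boldsymbol{\xi}\in\Xi}[\boldsymbol{z}^{\top}\boldsymbol{\xi}-\alpha f_t(\boldsymbol{x},\boldsymbol{\xi})]$. Assume there is a vector $\boldsymbol{M}$ such that $\alpha_t\le M_t$ for all $t$ whenever $(\lambda,\boldsymbol{s},\boldsymbol{z},\boldsymbol{\alpha},\boldsymbol{x})$ satisfies ( * ) with $\boldsymbol{x}\in S$. Define $\hat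 f_t((\alpha_t,\boldsymbol{y}^t),\boldsymbol{\xi})=(\boldsymbol{A}^t\boldsymbol{y}^t+\boldsymbol{a}^t\alpha_t)^{\top}\boldsymbol{\xi}+(\boldsymbol{b}^t)^{\top}\boldsymbol{y}^t+h^t\alpha_t$ and let $\hat Z_{C_2}$ be the set of $\boldsymbol{x}\in\mathbb{R}^n$ for which there exist $\lambda\ge0$, $\alpha_t\ge0$, $s_i\ge0$, $\boldsymbol{z}_{it}\in\mathbb{R}^m$, $\boldsymbol{y}^t\in\mathbb{R}^n$ with $\lambda\delta+\frac1N\sum_{i=1}^Ns_i\le\epsilon$; $\sup_{\boldsymbol{\xi}\in\Xi}[\boldsymbol{z}_{it}^{\top}\boldsymbol{\xi}-\hat f_t((\alpha_t,\boldsymbol{y}^t),\boldsymbol{\xi})]+1-\boldsymbol{z}_{it}^{\top}\boldsymbol{\zeta}^i-s_i\le0$ for all $i\in[N],t\in[T]$; $0\le y^t_r\le M_tx_r$ and $\alpha_t-M_t(1-x_r)\le y^t_r\le\alpha_t$ for all $r\in[n],t\in[T]$; $\|\boldsymbol{z}_{it}\|_*\le\lambda$ for all $i\in[N],t\in[T]$. Then $\hat Z_{C_2}$ is convex and $S\cap\hat Z_{C_2}=S\cap Z_{C_2}\subseteq S\cap Z_D$, where $Z_D=\{\boldsymbol{x}\in\mathbb{R}^n:\inf_{\mathbb{P}\in\mathcal{P}_W}\mathbb{P}\{\boldsymbol{\xi}:f_t(\boldsymbol{x},\boldsymbol{\xi})\ge0\ \forall t\in[T]\}\ge1-\epsilo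n\}$.
   Context: Setting: $\epsilon\in(0,1)$, $\delta>0$, $[T]=\{1,\dots,T\}$; $\Xi\subseteq\mathbb{R}^m$ is a nonempty closed convex set; $\|\cdot\|$ is a norm on $\mathbb{R}^m$ with dual norm $\|\cdot\|_*$; $\boldsymbol{\zeta}^1,\dots,\boldsymbol{\zeta}^N\in\Xi$ are given samples with empirical distribution $\mathbb{P}_{\tilde\zeta}$ (mass $1/N$ each); $\mathcal{P}_W=\{\mathbb{P}:\mathbb{P}\{\boldsymbol{\xi}\in\Xi\}=1,\ W(\mathbb{P},\mathbb{P}_{\tilde\zeta})\le\delta\}$ with $W$ the 1-Wasserstein distance with transport cost $\|\boldsymbol{\xi}_1-\boldsymbol{\xi}_2\|$. *)

(* Defs.v *)
From HB Require Import structures.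
From mathcomp Require Import all_boot all_order all_algebra.
From mathcomp Require Import all_classical all_reals all_analysis.
Set Implicit Arguments. Unset Strict Implicit. Unset Printing Implicit Defensive.
Import Order.TTheory GRing.Theory Num.Theory.
Import numFieldNormedType.Exports.
Local Open Scope classical_set_scope.
Local Open Scope ring_scope.

Definition dotv (R : realType) (k : nat) (u v : 'cV[R]_k) : R :=
  \sum_(i < k) u i 0 * v i 0.

Definition is_norm (R : realType) (m : nat) (nrm : 'cV[R]_m -> R) : Prop :=
  [/\ (forall x, 0 <= nrm x),
      (forall x, nrm x = 0 -> x = 0),
      (forall (c : R) x, nrm (c *: x) = `|c| * nrm x)
    & (forall x y, nrm (x + y) <= nrm x + nrm y)].

Definition dual_norm (R : realType) (m : nat) (nrm : 'cV[R]_m -> R)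
  (z : 'cV[R]_m) : R :=
  sup [set dotv z xi | xi in [set xi | nrm xi <= 1]].

Definition Rvec (R : realType) (m : nat) :=
  g_sigma_algebraType (@open 'cV[R]_m).

Definition empirical (R : realType) (m N : nat) (zeta : 'I_N -> 'cV[R]_m)
  (A : set (Rvec R m)) : \bar R :=
  ((N%:R)^-1 * \sum_(i < N) (\1_A (zeta i : Rvec R m)))%:E.

Definition is_coupling (R : realType) (m : nat)
  (P Q : set (Rvec R m) -> \bar R)
  (pi : probability (Rvec R m * Rvec R m)%type R) : Prop :=
  forall A : set (Rvec R m), measurable A ->
    pi (A `*` setT) = P A /\ pi (setT `*` A) = Q A.

Definition wasserstein (R : realType) (m : nat) (nrm : 'cV[R]_m -> R)
  (P Q : set (Rvec R m) -> \bar R) : \bar R :=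
  ereal_inf [set (\int[pi]_p (nrm ((p.1 : 'cV[R]_m) - p.2))%:E)%E
            | pi in [set pi | is_coupling P Q pi]].

Definition ambiguity_set (R : realType) (m N : nat) (nrm : 'cV[R]_m -> R)
  (Xi : set 'cV[R]_m) (zeta : 'I_N -> 'cV[R]_m) (delta : R) :
  set (probability (Rvec R m) R) :=
  [set P | P (Xi : set (Rvec R m)) = 1%E /\
           (wasserstein nrm P (empirical zeta) <= delta%:E)%E].

Definition fpiece (R : realType) (m n T : nat)
  (A : 'I_T -> 'M[R]_(m, n)) (a : 'I_T -> 'cV[R]_m) (b : 'I_T -> 'cV[R]_n)
  (h : 'I_T -> R) (t : 'I_T) (x : 'cV[R]_n) (xi : 'cV[R]_m) : R :=
  dotv (A t *m x + a t) xi + dotv (b t) x + h t.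

Definition fhat (R : realType) (m n T : nat)
  (A : 'I_T -> 'M[R]_(m, n)) (a : 'I_T -> 'cV[R]_m) (b : 'I_T -> 'cV[R]_n)
  (h : 'I_T -> R) (t : 'I_T) (alpha : R) (y : 'cV[R]_n) (xi : 'cV[R]_m) : R :=
  dotv (A t *m y + alpha *: a t) xi + dotv (b t) y + h t * alpha.

Definition Gf (R : realType) (m n T : nat) (Xi : set 'cV[R]_m)
  (A : 'I_T -> 'M[R]_(m, n)) (a : 'I_T -> 'cV[R]_m) (b : 'I_T -> 'cV[R]_n)
  (h : 'I_T -> R) (t : 'I_T) (z : 'cV[R]_m) (alpha : R) (x : 'cV[R]_n)
  : \bar R :=
  ereal_sup [set (dotv z xi - alpha * fpiece A a b h t x xi)%:E | xi in Xi].

Definition systemC2 (R : realType) (m n T N : nat) (nrm : 'cV[R]_m -> R)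
  (Xi : set 'cV[R]_m) (zeta : 'I_N -> 'cV[R]_m) (eps delta : R)
  (A : 'I_T -> 'M[R]_(m, n)) (a : 'I_T -> 'cV[R]_m) (b : 'I_T -> 'cV[R]_n)
  (h : 'I_T -> R)
  (lam : R) (s : 'I_N -> R) (z : 'I_N -> 'I_T -> 'cV[R]_m)
  (alpha : 'I_T -> R) (x : 'cV[R]_n) : Prop :=
  [/\ 0 <= lam, (forall t, 0 <= alpha t) & (forall i, 0 <= s i)] /\
  [/\ lam * delta + (N%:R)^-1 * \sum_(i < N) s i <= eps,
      (forall i t, (Gf Xi A a b h t (z i t) (alpha t) x
                    + (1 - dotv (z i t) (zeta i) - s i)%:E <= 0)%E)
    & (forall i t, dual_norm nrm (z i t) <= lam)].

Definition ZC2 (R : realType) (m n T N : nat) (nrm : 'cV[R]_m -> R)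
  (Xi : set 'cV[R]_m) (zeta : 'I_N -> 'cV[R]_m) (eps delta : R)
  (A : 'I_T -> 'M[R]_(m, n)) (a : 'I_T -> 'cV[R]_m) (b : 'I_T -> 'cV[R]_n)
  (h : 'I_T -> R) : set 'cV[R]_n :=
  [set x | exists lam s z alpha,
           systemC2 nrm Xi zeta eps delta A a b h lam s z alpha x].

Definition ZhatC2 (R : realType) (m n T N : nat) (nrm : 'cV[R]_m -> R)
  (Xi : set 'cV[R]_m) (zeta : 'I_N -> 'cV[R]_m) (eps delta : R)
  (A : 'I_T -> 'M[R]_(m, n)) (a : 'I_T -> 'cV[R]_m) (b : 'I_T -> 'cV[R]_n)
  (h : 'I_T -> R) (M : 'I_T -> R) : set 'cV[R]_n :=
  [set x | exists (lam : R) (s : 'I_N -> R) (z : 'I_N -> 'I_T -> 'cV[R]_m)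
                  (alpha : 'I_T -> R) (y : 'I_T -> 'cV[R]_n),
     [/\ 0 <= lam, (forall t, 0 <= alpha t) & (forall i, 0 <= s i)] /\
     [/\ lam * delta + (N%:R)^-1 * \sum_(i < N) s i <= eps,
         (forall i t,
            (ereal_sup [set (dotv (z i t) xi - fhat A a b h t (alpha t) (y t) xi)%:E
                       | xi in Xi]
             + (1 - dotv (z i t) (zeta i) - s i)%:E <= 0)%E),
         (forall r t, 0 <= y t r 0 /\ y t r 0 <= M t * x r 0),
         (forall r t, alpha t - M t * (1 - x r 0) <= y t r 0 /\ y t r 0 <= alpha t)
       & (forall i t, dual_norm nrm (z i t) <= lam)]].

Definition ZD (R : realType) (m n T N : nat) (nrm : 'cV[R]_m -> R)
  (Xi : set 'cV[R]_m) (zeta : 'I_N -> 'cV[R]_m) (eps delta : R)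
  (A : 'I_T -> 'M[R]_(m, n)) (a : 'I_T -> 'cV[R]_m) (b : 'I_T -> 'cV[R]_n)
  (h : 'I_T -> R) : set 'cV[R]_n :=
  [set x | ((1 - eps)%:E <=
     ereal_inf [set P ([set xi : Rvec R m | forall t, (0 <= fpiece A a b h t x xi)%R])
               | P in ambiguity_set nrm Xi zeta delta])%E].

(* Main.v *)
Require Import Defs.
From HB Require Import structures.
From mathcomp Require Import all_boot all_order all_algebra.
From mathcomp Require Import all_classical all_reals all_analysis.
From mathcomp Require Import ring lra.
Import Order.TTheory GRing.Theory Num.Theory.
Import numFieldNormedType.Exports.
Local Open Scope classical_set_scope.
Local Open Scope ring_scope.
Section Dot.
Variables (R : realType) (k : nat).
Implicit Types (u v w : 'cV[R]_k).

Lemma dotvDl u v w : dotv (u + v) w = dotv u w + dotv v w.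
Proof. by rewrite /dotv -big_split; apply: eq_bigr => i _; rewrite mxE mulrDl. Qed.
Lemma dotvDr u v w : dotv w (u + v) = dotv w u + dotv w v.
Proof. by rewrite /dotv -big_split; apply: eq_bigr => i _; rewrite mxE mulrDr. Qed.
Lemma dotvZl (c : R) u w : dotv (c *: u) w = c * dotv u w.
Proof. by rewrite /dotv mulr_sumr; apply: eq_bigr => i _; rewrite mxE mulrA. Qed.
Lemma dotvZr (c : R) u w : dotv w (c *: u) = c * dotv w u.
Proof. by rewrite /dotv mulr_sumr; apply: eq_bigr => i _; rewrite mxE mulrCA. Qed.
Lemma dotvNr u w : dotv w (- u) = - dotv w u.
Proof. by rewrite -scaleN1r dotvZr mulN1r. Qed.
Lemma dotvBr u v w : dotv w (u - v) = dotv w u - dotv w v.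
Proof. by rewrite dotvDr dotvNr. Qed.
Lemma dotv0r w : dotv w 0 = 0.
Proof. by rewrite /dotv big1 // => i _; rewrite mxE mulr0. Qed.
End Dot.

Lemma fhat_fpiece (R : realType) (m n T : nat) A a b h (t : 'I_T) (al : R)
  (x : 'cV[R]_n) (xi : 'cV[R]_m) :
  fhat A a b h t al (al *: x) xi = al * fpiece A a b h t x xi.
Proof.
rewrite /fhat /fpiece -scalemxAr -scalerDr !dotvZl dotvZr; ring.
Qed.

Lemma fhat_conv (R : realType) (m n T : nat) A a b h (t : 'I_T) (l al1 al2 : R)
  (y1 y2 : 'cV[R]_n) (xi : 'cV[R]_m) :
  fhat A a b h t (l * al1 + (1 - l) * al2) (l *: y1 + (1 - l) *: y2) xi =
  l * fhat A a b h t al1 y1 xi + (1 - l) * fhat A a b h t al2 y2 xi.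
Proof.
rewrite /fhat mulmxDr -!scalemxAr scalerDl !dotvDl !dotvZl !dotvDr !dotvZr.
ring.
Qed.

Lemma esup_le0 (R : realType) (k : nat) (Xi : set 'cV[R]_k) (F : 'cV[R]_k -> R) (c : R) :
  (ereal_sup [set (F xi)%:E | xi in Xi] + c%:E <= 0)%E <->
  (forall xi, Xi xi -> F xi + c <= 0).
Proof.
split.
- move=> H xi Xxi.
  have : ((F xi)%:E <= ereal_sup [set (F xi)%:E | xi in Xi])%E.
    by apply: ereal_sup_ubound; exists xi.
  move=> /(leeD2r c%:E) /le_trans /(_ H); by rewrite -EFinD lee_fin.
- move=> H.
  have : (ereal_sup [set (F xi)%:E | xi in Xi] <= (- c)%:E)%E.
    apply: ub_ereal_sup => _ [xi Xxi <-]; rewrite lee_fin.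
    by move: (H xi Xxi); lra.
  move=> /(leeD2r c%:E); by rewrite -EFinD addNr.
Qed.
Lemma part2 (R : realType) (m n T N : nat)
  (eps delta : R) (nrm : 'cV[R]_m -> R) (Xi : set 'cV[R]_m)
  (zeta : 'I_N -> 'cV[R]_m)
  (A : 'I_T -> 'M[R]_(m, n)) (a : 'I_T -> 'cV[R]_m) (b : 'I_T -> 'cV[R]_n)
  (h : 'I_T -> R) (S : set 'cV[R]_n) (M : 'I_T -> R) :
  (forall x, S x -> forall r, x r 0 = 0 \/ x r 0 = 1) ->
  (forall lam s z alpha x, S x ->
     systemC2 nrm Xi zeta eps delta A a b h lam s z alpha x ->
     forall t, alpha t <= M t) ->
  S `&` ZhatC2 nrm Xi zeta eps delta A a b h M
    = S `&` ZC2 nrm Xi zeta eps delta A a b h.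
Proof.
move=> Sbin HM; apply/seteqP; split => x [Sx].
- move=> [lam [s [z [al [y [[l0 al0 s0] [H1 H2 H3 H4 H5]]]]]]].
  have yE : forall t, y t = al t *: x.
    move=> t; apply/matrixP => r j; rewrite (ord1 j) mxE.
    have [/= ya yb] := H3 r t; have [/= yc yd] := H4 r t.
    move: ya yb yc yd; case: (Sbin x Sx r) => -> *;
    by apply: le_anti; apply/andP; split; lra.
  split => //; exists lam, s, z, al; split => //; split => // i t.
  have := H2 i t; rewrite /Gf !esup_le0 => H xi Xxi.
  by have := H xi Xxi; rewrite yE fhat_fpiece.
- move=> [lam [s [z [al sys]]]].
  have alM := HM _ _ _ _ _ Sx sys.
  move: sys => [[l0 al0 s0] [H1 H2 H5]].
  split => //; exists lam, s, z, al, (fun t => al t *: x); split => //; split => //.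
  + move=> i t; have := H2 i t; rewrite /Gf !esup_le0 => H xi Xxi.
    by rewrite fhat_fpiece; exact: H.
  + move=> r t; rewrite mxE; have := al0 t; have := alM t.
    by case: (Sbin x Sx r) => ->; rewrite ?mulr0 ?mulr1 => *; split; lra.
  + move=> r t; rewrite mxE; have := al0 t; have := alM t.
    by case: (Sbin x Sx r) => ->; rewrite ?mulr0 ?mulr1 => *; split; lra.
Qed.
Section NormEq.
Variables (R : realType) (m : nat) (nrm : 'cV[R]_m -> R).
Hypothesis Hn : is_norm nrm.

Lemma nrm0 : nrm 0 = 0.
Proof. case: Hn => _ _ HZ _; by rewrite -(scale0r 0) HZ normr0 mul0r. Qed.
Lemma nrmN x : nrm (- x) = nrm x.
Proof. case: Hn => _ _ HZ _; by rewrite -scaleN1r HZ normrN1 mul1r. Qed.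
Lemma nrm_ge0 x : 0 <= nrm x.
Proof. by case: Hn. Qed.
Lemma nrm_sum k (F : 'I_k -> 'cV[R]_m) : nrm (\sum_i F i) <= \sum_i nrm (F i).
Proof.
case: Hn => _ _ _ HD.
elim/big_ind2 : _ => //; first by rewrite nrm0.
by move=> x1 x2 y1 y2 h1 h2; apply: le_trans (HD _ _) _; exact: lerD.
Qed.

Lemma nrm_upper x : nrm x <= \sum_(i < m) `|x i 0| * nrm (delta_mx i 0).
Proof.
case: Hn => _ _ HZ _.
have xE : x = \sum_(i < m) x i 0 *: (delta_mx i 0 : 'cV[R]_m).
  apply/matrixP => i j; rewrite (ord1 j) summxE (bigD1 i) //= big1 ?addr0.
    by rewrite !mxE !eqxx mulr1.
  by move=> k /negbTE ki; rewrite !mxE eq_sym ki mulr0.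
rewrite {1}xE; apply: le_trans (@nrm_sum m (fun i => x i 0 *: (delta_mx i 0 : 'cV[R]_m))) _.
by apply: ler_sum => i _; rewrite HZ.
Qed.
End NormEq.
Arguments nrm0 {R m nrm}.
Arguments nrmN {R m nrm}.
Arguments nrm_ge0 {R m nrm}.
Arguments nrm_sum {R m nrm}.
Arguments nrm_upper {R m nrm}.

Lemma entry_le_mxnorm (R : realType) p q (M : 'M[R]_(p, q)) i j : `|M i j| <= `|M|.
Proof.
rewrite -[`|M|]/(mx_norm M) mx_normrE.
by apply/bigmax_geP; right; exists (i, j).
Qed.

Lemma lipschitz_cont (R : realType) (V : normedModType R) (f : V -> R) (K : R) :
  0 <= K -> (forall x y, `|f x - f y| <= K * `|x - y|) -> continuous f.
Proof.
move=> K0 Hf x; apply/(@cvgrPdist_lt _ R^o) => e e0; apply/nbhs_normP.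
exists (e / (K + 1)) => /=; first by rewrite divr_gt0 // ltr_wpDl.
move=> y /= Hy; apply: le_lt_trans (Hf x y) _.
have K1 : 0 < K + 1 by rewrite ltr_wpDl.
have h1 : K * `|x - y| <= (K + 1) * `|x - y| by rewrite ler_wpM2r // lerDl.
apply: le_lt_trans h1 _; rewrite mulrC -ltr_pdivlMr //.
Qed.
Lemma nrm_lower (R : realType) (m : nat) (nrm : 'cV[R]_m -> R) :
  is_norm nrm -> exists2 c, 0 < c & forall (xi : 'cV[R]_m) (i : 'I_m), c * `|xi i 0| <= nrm xi.
Proof.
move=> Hn; have [m0|mpos] := eqVneq m 0%N.
  by exists 1 => // xi [k Hk]; exfalso; move: Hk; rewrite m0.
have HN := Hn; case: HN => Hge Hdef HZ HD.
pose g := fun v : 'rV[R]_m => nrm (v^T).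
pose C := \sum_(i < m) nrm (delta_mx i 0 : 'cV[R]_m).
have C0 : 0 <= C by apply: sumr_ge0 => i _; exact: Hge.
have rev : forall u w, `|nrm u - nrm w| <= nrm (u - w).
  move=> u w; rewrite ler_norml.
  have h1 := HD (u - w) w; have h2 := HD (w - u) u.
  rewrite subrK in h1; rewrite subrK in h2.
  have : nrm (w - u) = nrm (u - w) by rewrite -opprB nrmN.
  move=> e; rewrite e in h2; apply/andP; split; lra.
have gcont : continuous g.
  apply: (@lipschitz_cont _ _ g C C0) => u w.
  rewrite /g; apply: (le_trans (rev u^T w^T)). rewrite -linearB /=.
  apply: le_trans (nrm_upper Hn _) _; rewrite /C mulr_suml.
  apply: ler_sum => i _; rewrite mulrC ler_wpM2l //.
  by rewrite mxE; exact: entry_le_mxnorm.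
pose Sph := [set v : 'rV[R]_m | `|v| = 1].
have cpt : compact Sph.
  apply: bounded_closed_compact.
    by exists 1; split => // M0 M0gt v /= ->; exact: ltW.
  apply: (@preimage_closed _ _ (fun v : 'rV[R]_m => `|v|) [set 1]).
    by move=> v _; exact: norm_continuous.
  exact: closed_eq.
have i0 : 'I_m by exists 0%N; rewrite lt0n.
have tEq : forall (c : R) (v : 'rV[R]_m), (c *: v)^T = c *: v^T.
  by move=> c v; apply/matrixP => k l; rewrite !mxE.
have Sphn : Sph !=set0.
  pose v0 := const_mx 1 : 'rV[R]_m.
  have v0n : `|v0| != 0.
    rewrite normr_eq0; apply/eqP => /matrixP /(_ 0 i0); rewrite !mxE.
    by move/eqP; rewrite oner_eq0.
  exists (`|v0|^-1 *: v0); rewrite /Sph /= normrZ ger0_norm ?invr_ge0 //.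
  by rewrite mulVf.
have [c0 c0S c0min] := EVT_min_rV Sphn cpt (continuous_subspaceT gcont).
move: c0S; rewrite inE /Sph /= => c0S.
have gpos : 0 < g c0.
  rewrite lt_neqAle Hge andbT; apply/eqP => /esym /Hdef /(congr1 trmx).
  rewrite trmxK trmx0 => c00; move: c0S; rewrite c00 normr0 => /eqP.
  by rewrite eq_sym oner_eq0.
exists (g c0) => // xi i.
have [->|xin] := eqVneq xi 0; first by rewrite mxE normr0 mulr0 nrm0.
have vn : 0 < `|xi^T| by rewrite normr_gt0; apply: contra xin => /eqP /(congr1 trmx); rewrite trmxK trmx0 => ->.
have wS : (`|xi^T|^-1 *: xi^T) \in Sph.
  rewrite inE /Sph /= normrZ ger0_norm; last by rewrite invr_ge0 ltW.
  by rewrite mulVf ?gt_eqF.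
have := c0min _ wS; rewrite /g tEq trmxK HZ ger0_norm; last by rewrite invr_ge0 ltW.
move=> H0; have H : g c0 * `|xi^T| <= nrm xi.
  have vi : 0 < `|xi^T|^-1 by rewrite invr_gt0.
  rewrite -(ler_pM2r vi) -mulrA mulfV ?gt_eqF // mulr1 mulrC //.
apply: le_trans H; apply: ler_wpM2l; first exact: ltW.
by have := @entry_le_mxnorm _ _ _ xi^T 0 i; rewrite mxE.
Qed.

Arguments nrm_lower {R m nrm}.
Section Dual.
Variables (R : realType) (m : nat) (nrm : 'cV[R]_m -> R).
Hypothesis Hn : is_norm nrm.

Lemma dual_has_sup (z : 'cV[R]_m) :
  has_sup [set dotv z xi | xi in [set xi | nrm xi <= 1]].
Proof.
have [c c0 Hc] := nrm_lower Hn.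
split; first by exists 0, 0 => //=; [rewrite nrm0 // | rewrite dotv0r].
exists (\sum_(i < m) `|z i 0| / c) => _ [xi /= xi1 <-].
rewrite /dotv; apply: le_trans (ler_norm _) _.
apply: le_trans (ler_norm_sum _ _ _) _; apply: ler_sum => i _.
rewrite normrM ler_wpM2l // -(ler_pM2l c0) mulfV ?gt_eqF //.
exact: le_trans (Hc xi i) _.
Qed.

Lemma dual_ub (z xi : 'cV[R]_m) : dotv z xi <= dual_norm nrm z * nrm xi.
Proof.
have HN := Hn; case: HN => Hge Hdef HZ HD.
have [->|xin] := eqVneq xi 0; first by rewrite dotv0r nrm0 // mulr0.
have np : 0 < nrm xi.
  by rewrite lt_neqAle Hge andbT; apply/eqP => /esym /Hdef; apply/eqP.
have : dotv z ((nrm xi)^-1 *: xi) <= dual_norm nrm z.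
  apply: sup_upper_bound; first exact: dual_has_sup.
  exists ((nrm xi)^-1 *: xi) => //=.
  by rewrite HZ ger0_norm ?invr_ge0 ?Hge // mulVf // gt_eqF.
rewrite dotvZr -(ler_pM2r np) mulrAC mulVf ?gt_eqF // mul1r //.
Qed.

Lemma dual_conv (l : R) (z1 z2 : 'cV[R]_m) : 0 <= l <= 1 ->
  dual_norm nrm (l *: z1 + (1 - l) *: z2)
  <= l * dual_norm nrm z1 + (1 - l) * dual_norm nrm z2.
Proof.
move=> /andP [l0 l1].
apply: ge_sup; first by case: (dual_has_sup (l *: z1 + (1 - l) *: z2)).
move=> _ [xi /= xi1 <-]; rewrite dotvDl !dotvZl.
have h1 : dotv z1 xi <= dual_norm nrm z1.
  by apply: sup_upper_bound; [exact: dual_has_sup | exists xi].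
have h2 : dotv z2 xi <= dual_norm nrm z2.
  by apply: sup_upper_bound; [exact: dual_has_sup | exists xi].
apply: lerD; apply: ler_wpM2l => //; lra.
Qed.
End Dual.
Arguments dual_has_sup {R m nrm}.
Arguments dual_ub {R m nrm}.
Arguments dual_conv {R m nrm}.
Section P1.
Local Open Scope convex_scope.
Lemma part1 (R : realType) (m n T N : nat)
  (eps delta : R) (nrm : 'cV[R]_m -> R) (Xi : set 'cV[R]_m)
  (zeta : 'I_N -> 'cV[R]_m)
  (A : 'I_T -> 'M[R]_(m, n)) (a : 'I_T -> 'cV[R]_m) (b : 'I_T -> 'cV[R]_n)
  (h : 'I_T -> R) (M : 'I_T -> R) :
  is_norm nrm ->
  convex_set (ZhatC2 nrm Xi zeta eps delta A a b h M
                : set (convex_lmodType 'cV[R]_n)).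
Proof.
move=> Hn x1 x2 l; rewrite !inE.
have -> : x1 <| l |> x2 = l%:num *: (x1 : 'cV[R]_n) + (1 - l%:num) *: x2 by [].
have t0 : 0 <= l%:num by [].
have t1 : l%:num <= 1 by [].
move: (l%:num) t0 t1 => t t0 t1.
move=> [lam1 [s1 [z1 [al1 [y1 [[l10 al10 s10] [H11 H12 H13 H14 H15]]]]]]].
move=> [lam2 [s2 [z2 [al2 [y2 [[l20 al20 s20] [H21 H22 H23 H24 H25]]]]]]].
exists (t * lam1 + (1 - t) * lam2), (fun i => t * s1 i + (1 - t) * s2 i),
  (fun i k => t *: z1 i k + (1 - t) *: z2 i k),
  (fun k => t * al1 k + (1 - t) * al2 k),
  (fun k => t *: y1 k + (1 - t) *: y2 k).
split; first split.
- by nra.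
- by move=> k; have := al10 k; have := al20 k; nra.
- by move=> i; have := s10 i; have := s20 i; nra.
split.
- rewrite big_split /= -!mulr_sumr.
  have e : (t * lam1 + (1 - t) * lam2) * delta +
     N%:R^-1 * (t * \sum_(i < N) s1 i + (1 - t) * \sum_(i < N) s2 i) =
     t * (lam1 * delta + N%:R^-1 * \sum_(i < N) s1 i) +
     (1 - t) * (lam2 * delta + N%:R^-1 * \sum_(i < N) s2 i) by ring.
  by rewrite e; nra.
- move=> i k; apply/esup_le0 => xi Xxi.
  move: (H12 i k) (H22 i k) => /esup_le0 /(_ xi Xxi) e1 /esup_le0 /(_ xi Xxi) e2.
  rewrite fhat_conv dotvDl dotvDl !dotvZl.
  by nra.
- move=> r k; rewrite !mxE.
  move: (H13 r k) (H23 r k) => [e1 e2] [e3 e4]; split; first by nra.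
  by rewrite mulrDr !mulrA ![M k * _]mulrC; nra.
- move=> r k; rewrite !mxE.
  move: (H14 r k) (H24 r k) => [e1 e2] [e3 e4]; split; last by nra.
  have e : t * al1 k + (1 - t) * al2 k - M k * (1 - (t * x1 r 0 + (1 - t) * x2 r 0))
    = t * (al1 k - M k * (1 - x1 r 0)) + (1 - t) * (al2 k - M k * (1 - x2 r 0)) by ring.
  by rewrite e; nra.
- move=> i k; have tt : 0 <= t <= 1 by rewrite t0 t1.
  apply: le_trans (dual_conv Hn t _ _ tt) _.
  by have := H15 i k; have := H25 i k; nra.
Qed.

End P1.
Lemma le_lower_int d (X : measurableType d) (R : realType)
  (mu : {measure set X -> \bar R}) (f g : X -> \bar R) :
  (forall x, (0 <= f x)%E) -> (forall x, (f x <= g x)%E) ->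
  (\int[mu]_x f x <= \int[mu]_x g x)%E.
Proof.
move=> f0 fg; have g0 : forall x, (0 <= g x)%E by move=> x; exact: le_trans (f0 x) (fg x).
rewrite !ge0_integralTE //.
apply: le_ereal_sup => _ [hh hf <-]; exists hh => //= x; exact: le_trans (hf x) (fg x).
Qed.

Lemma bigsetU_ordP (X : Type) n (F : 'I_n -> set X) x :
  (\big[setU/set0]_(i < n) F i) x <-> exists i, F i x.
Proof.
split.
- elim/big_rec : _ => [//|i B _ IH [Fi|/IH //]]; by exists i.
- by move=> [i Fi]; rewrite (bigD1 i) //=; left.
Qed.

Lemma closed_meas (R : realType) m (C : set 'cV[R]_m) :
  closed C -> measurable (C : set (Rvec R m)).
Proof.
move=> cC; rewrite -(setCK C); apply: measurableC.
apply: sub_sigma_algebra; exact: closed_openC.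
Qed.
Lemma closed_set1_cV (R : realType) m (v : 'cV[R]_m) : closed [set v].
Proof. exact/accessible_closed_set1/hausdorff_accessible/norm_hausdorff. Qed.

Lemma dotv_cont (R : realType) m (c : 'cV[R]_m) (k : R) : continuous (fun xi : 'cV[R]_m => dotv c xi + k).
Proof.
apply: (@lipschitz_cont _ _ _ (\sum_(i < m) `|c i 0|)).
  by apply: sumr_ge0 => i _.
move=> u w; rewrite opprD addrACA subrr addr0 -dotvBr /dotv mulr_suml.
apply: le_trans (ler_norm_sum _ _ _) _; apply: ler_sum => i _.
rewrite normrM ler_wpM2l //.
by have := @entry_le_mxnorm _ _ _ (u - w) i 0.
Qed.

Lemma closed_good (R : realType) (m n T : nat) A a b h (x : 'cV[R]_n) :
  closed [set xi : 'cV[R]_m | forall t : 'I_T, 0 <= fpiece A a b h t x xi].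
Proof.
have -> : [set xi : 'cV[R]_m | forall t : 'I_T, 0 <= fpiece A a b h t x xi] =
  \bigcap_(t in setT) ((fun xi => fpiece A a b h t x xi) @^-1` [set r | 0 <= r]).
  by apply/seteqP; split => xi /= H t; [move=> _; exact: H | exact: H].
apply: closed_bigI => t _; apply: preimage_closed; last exact: closed_ge.
move=> xi _.
have -> : (fun xi => fpiece A a b h t x xi) =
  (fun xi => dotv (A t *m x + a t) xi + (dotv (b t) x + h t)).
  by apply: funext => y; rewrite /fpiece addrA.
exact: dotv_cont.
Qed.

Lemma part3 (R : realType) (m n T N : nat)
  (eps delta : R) (nrm : 'cV[R]_m -> R) (Xi : set 'cV[R]_m)
  (zeta : 'I_N -> 'cV[R]_m)
  (A : 'I_T -> 'M[R]_(m, n)) (a : 'I_T -> 'cV[R]_m) (b : 'I_T -> 'cV[R]_n)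
  (h : 'I_T -> R) (x : 'cV[R]_n) :
  0 < eps -> (0 < N)%N -> is_norm nrm -> closed Xi ->
  (forall i, Xi (zeta i)) ->
  ZC2 nrm Xi zeta eps delta A a b h x -> ZD nrm Xi zeta eps delta A a b h x.
Proof.
move=> e0 N0 Hn Xc Xz [lam [s [z [al [[l0 al0 s0] [H1 H2 H3]]]]]].
rewrite /ZD /=; apply: le_ereal_inf_tmp => _ [P [PXi PW] <-].
pose G : set (Rvec R m) := [set xi | forall t, 0 <= fpiece A a b h t x xi].
have mG : measurable G by apply: closed_meas; exact: closed_good.
have mXi : measurable (Xi : set (Rvec R m)) by exact: closed_meas.
have PnG0 : (0 <= P (~` G))%E by exact: measure_ge0.
have PnG1 : (P (~` G) <= 1)%E by apply: probability_le1; exact: measurableC.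
have PnGE : P (~` G) = (fine (P (~` G)))%:E.
  by rewrite fineK // ge0_fin_numE // (le_lt_trans PnG1) // ltry.
suff claim : (P (~` G) <= eps%:E)%E.
  have := probability_setC P (measurableC mG); rewrite setCK => ->.
  rewrite PnGE -EFinB lee_fin; move: claim; rewrite PnGE lee_fin; lra.
suff core : forall (pi : probability (Rvec R m * Rvec R m)%type R), is_coupling P (empirical zeta) pi ->
  forall w, (\int[pi]_p (nrm ((p.1 : 'cV[R]_m) - p.2))%:E)%E = w%:E ->
  (P (~` G) <= (lam * w + (N%:R)^-1 * \sum_(i < N) s i)%:E)%E.
  apply/lee_addgt0Pr => eta eta0.
  pose eta' := eta / (lam + 1).
  have eta'0 : 0 < eta' by rewrite divr_gt0 // ltr_wpDl.
  have : (wasserstein nrm P (empirical zeta) < (delta + eta')%:E)%E.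
    by apply: le_lt_trans PW _; rewrite lte_fin ltrDl.
  move=> /ereal_inf_lt [_ [pi cpl <-] Wlt].
  have W0 : (0 <= \int[pi]_p (nrm ((p.1 : 'cV[R]_m) - p.2))%:E)%E.
    by apply: integral_ge0 => p _; rewrite lee_fin nrm_ge0.
  have WE : (\int[pi]_p (nrm ((p.1 : 'cV[R]_m) - p.2))%:E =
     (fine (\int[pi]_p (nrm ((p.1 : 'cV[R]_m) - p.2))%:E))%:E)%E.
    by rewrite fineK // ge0_fin_numE // (lt_trans Wlt) // ltry.
  move: Wlt (core pi cpl _ WE); rewrite WE PnGE -EFinD !lee_fin lte_fin.
  set w := fine _ => Wlt Hc.
  apply: le_trans Hc _ => /=.
  have h1 : lam * w <= lam * (delta + eta') by rewrite ler_wpM2l // ltW.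
  have h2 : lam * eta' <= eta.
    rewrite /eta' mulrA ler_pdivrMr ?ltr_wpDl //; nra.
  nra.
move=> pi cpl w Wint.
have cP : forall B, measurable B -> pi (B `*` setT) = P B.
  by move=> B mB; have [] := cpl B mB.
have cQ : forall B, measurable B -> pi (setT `*` B) = empirical zeta B.
  by move=> B mB; have [] := cpl B mB.
pose rho (v : 'cV[R]_m) : 'I_N :=
  if [pick j | zeta j == v] is Some j0
  then Order.arg_min j0 (fun j => zeta j == v) s else Ordinal N0.
have rho1 : forall i, zeta (rho (zeta i)) = zeta i /\ s (rho (zeta i)) <= s i.
  move=> i; rewrite /rho; case: pickP => [j0 /eqP Hj0 | H]; last first.
    by have := H i; rewrite eqxx.
  have Pj0 : (fun j => zeta j == zeta i) j0 by rewrite /= Hj0.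
  case: (@arg_minP _ _ _ j0 (fun j => zeta j == zeta i) s Pj0) => j /eqP Hj Hmin.
  by split => //; apply: Hmin.
pose W (j : 'I_N) : set (Rvec R m) := [set v | (exists i, zeta i = v) /\ rho v = j].
have Wsub : forall j v, W j v -> v = zeta j.
  by move=> j v [[i <-] <-]; rewrite (rho1 i).1.
have mW : forall j, measurable (W j).
  move=> j; have [Hj|Hj] := eqVneq (rho (zeta j)) j.
    have -> : W j = [set zeta j].
      apply/seteqP; split => v; first exact: Wsub.
      by move=> /= ->; split => //; exists j.
    by apply: closed_meas; exact: closed_set1_cV.
  have -> : W j = set0.
    apply/seteqP; split => v // /[dup] /Wsub -> [_ Hr].
    by move: Hj; rewrite Hr eqxx.
  exact: measurable0.
have Wdisj : forall i j v, W i v -> W j v -> i = j.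
  by move=> i j v [_ <-] [_ <-].
have zW : forall i, W (rho (zeta i)) (zeta i) by move=> i; split => //; exists i.
pose Zs := \big[setU/set0]_(j < N) W j.
have mZs : measurable Zs by apply: bigsetU_measurable => j _; exact: mW.
have zZs : forall i, Zs (zeta i) by move=> i; apply/bigsetU_ordP; exists (rho (zeta i)).
have KP : forall j (xi v : 'cV[R]_m), Xi xi -> ~ G xi -> W j v ->
    Order.max (1 - s j) 0 <= lam * nrm (xi - v).
  move=> j xi v Xxi nG /Wsub ->.
  have [t ft] : exists t, fpiece A a b h t x xi < 0.
    apply: contrapT => H; apply: nG => t; rewrite leNgt; apply/negP => ft.
    by apply: H; exists t.
  have := H2 j t; rewrite /Gf esup_le0 => /(_ xi Xxi) Hc.
  have du := dual_ub Hn (z j t) (zeta j - xi); rewrite dotvBr in du.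
  have nE : nrm (zeta j - xi) = nrm (xi - zeta j) by rewrite -opprB nrmN.
  rewrite nE in du.
  have hm : dual_norm nrm (z j t) * nrm (xi - zeta j) <= lam * nrm (xi - zeta j).
    by rewrite ler_wpM2r // ?nrm_ge0 // H3.
  have af : al t * fpiece A a b h t x xi <= 0 by rewrite mulr_ge0_le0 // ltW.
  have nn : 0 <= lam * nrm (xi - zeta j) by rewrite mulr_ge0 // nrm_ge0.
  rewrite ge_max nn andbT; lra.
pose D : set (Rvec R m) := ~` G `&` Xi.
have mD : measurable D by apply: measurableI => //; exact: measurableC.
pose pr (X : set (Rvec R m * Rvec R m)) := fine (pi X).
have piE : forall X, measurable X -> pi X = (pr X)%:E.
  move=> X mX; rewrite fineK // ge0_fin_numE ?measure_ge0 //.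
  by apply: (le_lt_trans (probability_le1 pi mX)); rewrite ltry.
have prle : forall X Y, measurable X -> measurable Y -> X `<=` Y -> pr X <= pr Y.
  move=> X Y mX mY XY; rewrite -lee_fin -!piE //.
  by apply: le_measure => //; rewrite inE.
have pr0 : forall X, measurable X -> 0 <= pr X.
  by move=> X mX; rewrite -lee_fin -piE // measure_ge0.
have stepa : (P (~` G) <= (pr (D `*` setT))%:E)%E.
  rewrite -piE; last by apply: measurableX.
  rewrite cP //.
  have PnXi : P (~` (Xi : set (Rvec R m))) = 0%E.
    by rewrite probability_setC // PXi subee.
  apply: le_trans (_ : (P (D `|` ~` Xi) <= _)%E).
    apply: le_measure; rewrite ?inE //; first exact: measurableC.
      by apply: measurableU => //; exact: measurableC.
    by move=> p nGp; have [Xp|nXp] := pselect (Xi p); [left|right].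
  apply: le_trans (measureU2 _ _ _) _ => //; [exact: measurableC|].
  rewrite -[leRHS]adde0; apply: leeD2l; rewrite le_eqVlt; apply/orP; left; apply/eqP.
  by move: (probability_setC P mXi); rewrite PXi subee.
apply: le_trans stepa _; rewrite lee_fin.
have mT : measurable (setT : set (Rvec R m)) by exact: measurableT.
have mX : forall j, measurable (D `*` W j) by move=> j; apply: measurableX.
have mTW : forall j, measurable ((setT : set (Rvec R m)) `*` W j) by move=> j; apply: measurableX.
have stepb : pr (D `*` setT) <= pr (D `*` Zs).
  have mnZ : measurable (~` Zs) by exact: measurableC.
  have e1 : pr (setT `*` ~` Zs) = 0.
    rewrite /pr cQ //= /empirical big1 ?mulr0 //= => i _.
    by rewrite indicE in_setC mem_set.
  have : (pi (D `*` setT) <= pi (D `*` Zs) + pi (setT `*` ~` Zs))%E.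
    apply: le_trans (measureU2 _ _ _); last exact: measurableX.
      apply: le_measure; rewrite ?inE //; first exact: measurableX.
        by apply: measurableU; apply: measurableX.
      move=> [p1 p2] /= [Dp _]; have [Zp|nZp] := pselect (Zs p2); [left|right] => //.
    exact: measurableX.
  rewrite !piE //; try exact: measurableX.
  by rewrite -EFinD lee_fin e1 addr0.
have stepc : pr (D `*` Zs) = \sum_(j < N) pr (D `*` W j).
  have XE : D `*` Zs = \big[setU/set0]_(j < N) (D `*` W j).
    apply/seteqP; split => -[p1 p2] /=.
      by move=> [Dp /bigsetU_ordP [j Wj]]; apply/bigsetU_ordP; exists j.
    move/bigsetU_ordP => [j [Dp Wj]]; split => //; apply/bigsetU_ordP; by exists j.
  rewrite /pr XE measure_bigsetU_ord //; last first.
    move=> i j _ _ [[p1 p2] [[_ Wi] [_ Wj]]]; exact: Wdisj Wi Wj.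
  rewrite (eq_bigr (fun j => (pr (D `*` W j))%:E)); last by move=> j _; exact: piE.
  by rewrite sumEFin.
have stepd : forall j, pr (D `*` W j) <=
    Order.max (1 - s j) 0 * pr (D `*` W j) + s j * pr (setT `*` W j).
  move=> j; have p0 := pr0 _ (mX j).
  have p1 : pr (D `*` W j) <= pr (setT `*` W j).
    by apply: prle => //; move=> [q1 q2] /= [].
  have := s0 j; have [hs|hs] := leP (1 - s j) 0.
    by nra.
  by nra.
have stepe : \sum_(j < N) Order.max (1 - s j) 0 * pr (D `*` W j) <= lam * w.
  have [l00|lpos] := eqVneq lam 0.
    rewrite l00 mul0r big1 // => j _.
    have [[[p1 p2] [[nGp Xp] Wp]]|nop] := pselect (exists p, (D `*` W j) p).
      have := KP j p1 p2 Xp nGp Wp; rewrite l00 mul0r => cle.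
      have -> : Order.max (1 - s j) 0 = 0.
        by apply: le_anti; rewrite cle /= le_max lexx orbT.
      by rewrite mul0r.
    have -> : D `*` W j = set0.
      by apply/seteqP; split => p // Xp; apply: nop; exists p.
    by rewrite /pr measure0 mulr0.
  have lp : 0 < lam by rewrite lt_neqAle eq_sym lpos l0.
  pose f (p : Rvec R m * Rvec R m) : R :=
    \sum_(j < N) (Order.max (1 - s j) 0 / lam) * \1_(D `*` W j) p.
  have f0 : forall p, 0 <= f p.
    move=> p; apply: sumr_ge0 => j _; apply: mulr_ge0; last by rewrite indicE.
    by apply: divr_ge0; [rewrite le_max lexx orbT | exact: ltW].
  have fle : forall p, f p <= nrm ((p.1 : 'cV[R]_m) - p.2).
    move=> p; have [[j Xj]|noj] := pselect (exists j, (D `*` W j) p).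
      rewrite /f (bigD1 j) //= big1 ?addr0.
        rewrite indicE mem_set // mulr1 ler_pdivrMr // mulrC.
        by case: p Xj => p1 p2 [[nGp Xp] Wp]; exact: KP j p1 p2 Xp nGp Wp.
      move=> k kj; rewrite indicE memNset ?mulr0 // => Xk.
      by move/eqP: kj; apply; case: Xk => _ Wk; case: Xj => _ Wj; exact: Wdisj Wk Wj.
    rewrite /f big1; first exact: nrm_ge0.
    by move=> j _; rewrite indicE memNset ?mulr0 // => Xj; apply: noj; exists j.
  have intf : (\int[pi]_p (f p)%:E =
      (\sum_(j < N) (Order.max (1 - s j) 0 / lam) * pr (D `*` W j))%:E)%E.
    have fE : (fun p => (f p)%:E) = (fun p => \sum_(j < N)
        ((Order.max (1 - s j) 0 / lam) * \1_(D `*` W j) p)%:E)%E.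
      by apply: funext => p; rewrite /f sumEFin.
    rewrite fE ge0_integral_sum //; first last.
    - move=> j p _; rewrite lee_fin; apply: mulr_ge0; last by rewrite indicE.
      by apply: divr_ge0; [rewrite le_max lexx orbT | exact: ltW].
    - move=> j; apply/measurable_realfun.measurable_EFinP; apply: measurable_realfun.measurable_funM.
        exact: measurable_cst.
      exact: measurable_realfun.measurable_indic.
    rewrite -sumEFin; apply: eq_bigr => j _.
    rewrite (@integralZl_indic _ _ _ pi setT measurableT (fun _ => D `*` W j)) //; last first.
      move=> hlt; exfalso; move: hlt; apply/negP; rewrite -leNgt.
      by apply: divr_ge0; [rewrite le_max lexx orbT | exact: ltW].
    by rewrite integral_indic // setIT [RHS]EFinM -(piE _ (mX j)).
  have H : (\int[pi]_p (f p)%:E <= \int[pi]_p (nrm ((p.1 : 'cV[R]_m) - p.2))%:E)%E.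
    by apply: le_lower_int => p; rewrite lee_fin ?f0 ?fle.
  move: H; rewrite intf Wint lee_fin => H.
  have -> : \sum_(j < N) Order.max (1 - s j) 0 * pr (D `*` W j) =
     lam * \sum_(j < N) (Order.max (1 - s j) 0 / lam) * pr (D `*` W j).
    rewrite mulr_sumr; apply: eq_bigr => j _.
    by field; rewrite gt_eqF.
  by rewrite ler_wpM2l // ltW.
have stepf : \sum_(j < N) s j * pr (setT `*` W j) <= N%:R^-1 * \sum_(i < N) s i.
  have prTW : forall j, pr (setT `*` W j) = N%:R^-1 * \sum_(i < N) \1_(W j) (zeta i : Rvec R m).
    by move=> j; rewrite /pr cQ.
  rewrite (eq_bigr (fun j => N%:R^-1 * \sum_(i < N) s j * \1_(W j) (zeta i : Rvec R m))); last first.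
    by move=> j _; rewrite prTW mulrCA mulr_sumr.
  rewrite -mulr_sumr exchange_big /=; apply: ler_wpM2l; first by rewrite invr_ge0.
  apply: ler_sum => i _.
  rewrite (bigD1 (rho (zeta i))) //= big1 ?addr0.
    by rewrite indicE mem_set ?mulr1; [exact: (rho1 i).2 | exact: zW].
  move=> j jn; rewrite indicE memNset ?mulr0 // => Wj.
  by move/eqP: jn; apply; exact: Wdisj Wj (zW i).
apply: le_trans stepb _; rewrite stepc.
apply: le_trans (ler_sum _ (fun j _ => stepd j)) _.
by rewrite big_split /=; apply: lerD.
Qed.

Theorem theorem3 (R : realType) (m n T N : nat)
  (eps delta : R) (nrm : 'cV[R]_m -> R) (Xi : set 'cV[R]_m)
  (zeta : 'I_N -> 'cV[R]_m)
  (A : 'I_T -> 'M[R]_(m, n)) (a : 'I_T -> 'cV[R]_m) (b : 'I_T -> 'cV[R]_n)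
  (h : 'I_T -> R) (S : set 'cV[R]_n) (M : 'I_T -> R) :
  0 < eps -> eps < 1 -> 0 < delta -> (0 < N)%N ->
  is_norm nrm ->
  Xi !=set0 -> closed Xi -> convex_set (Xi : set (convex_lmodType 'cV[R]_m)) ->
  (forall i, Xi (zeta i)) ->
  (forall x, S x -> forall r, x r 0 = 0 \/ x r 0 = 1) ->
  (forall lam s z alpha x, S x ->
     systemC2 nrm Xi zeta eps delta A a b h lam s z alpha x ->
     forall t, alpha t <= M t) ->
  convex_set (ZhatC2 nrm Xi zeta eps delta A a b h M
                : set (convex_lmodType 'cV[R]_n)) /\
  S `&` ZhatC2 nrm Xi zeta eps delta A a b h M
    = S `&` ZC2 nrm Xi zeta eps delta A a b h /\
  S `&` ZC2 nrm Xi zeta eps delta A a b h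
    `<=` S `&` ZD nrm Xi zeta eps delta A a b h.
Proof.
move=> e0 e1 d0 N0 Hn Xn Xc Xcv Xz Sbin HM.
split; first exact: part1.
split; first exact: part2.
move=> x [Sx Zx]; split => //; exact: part3.
Qed.
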